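(* Let $G$ be a graph with vertices $a,b,c,\alpha,\beta,\gamma$. Suppose there is perfect state transfer between $e_a-e_b$ and $e_\alpha-e_\beta$ at time $\tau$ in $G$, and there is also perfect state transfer between $e_b-e_c$ and $e_\beta-e_\gamma$ at the same time $\tau$ in $G$. Then there is perfect state transfer between $e_a-e_c$ and $e_\alpha-e_\gamma$ at time $\tau$ in $G$.
   Context: For a graph $G$ with Laplacian $L=\Delta-A$ ($\Delta$ degree matrix, $A$ adjacency matrix), $U(t)=\exp(itL)$. Perfect state transfer between $e_x-e_y$ and $e_z-e_w$ at time $\tau$ means $U(\tau)(e_x-e_y)=\lambda(e_z-e_w)$ for some $\lambda\in\mathbb{C}$ with $|\lambda|=1$; here $e_v$ is the standard basis vector of vertex $v$. *)

(* Defs.v *)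
From HB Require Import structures.
From mathcomp Require Import all_boot all_order all_algebra.
From mathcomp Require Import complex.
From mathcomp Require Import all_classical all_reals all_analysis.
Set Implicit Arguments. Unset Strict Implicit. Unset Printing Implicit Defensive.
Import Order.TTheory GRing.Theory Num.Theory ComplexField.
Import numFieldNormedType.Exports.
Local Open Scope ring_scope.

Definition simple_graph (n : nat) (adj : rel 'I_n) : Prop :=
  symmetric adj /\ irreflexive adj.

Definition degree_mx (R : realType) (n : nat) (adj : rel 'I_n) : 'M[R[i]]_n :=
  \matrix_(x, y) (if x == y then (#|[set z | adj x z]|)%:R else 0).
Definition adjacency_mx (R : realType) (n : nat) (adj : rel 'I_n) : 'M[R[i]]_n :=
  \matrix_(x, y) (if adj x y then 1 else 0).
Definition laplacian (R : realType) (n : nat) (adj : rel 'I_n) : 'M[R[i]]_n :=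
  degree_mx R adj - adjacency_mx R adj.

Definition expmx (R : realType) (n : nat) (A : 'M[R[i]]_n) : 'M[R[i]]_n :=
  limn (series (fun k : nat => (k`!%:R)^-1 *: A ^+ k)).

Definition transition (R : realType) (n : nat) (adj : rel 'I_n) (t : R) : 'M[R[i]]_n :=
  expmx ((('i%C : R[i]) * (t%:C)%C) *: laplacian R adj).

Definition ev (R : realType) (n : nat) (v : 'I_n) : 'cV[R[i]]_n := delta_mx v 0.

Definition pst (R : realType) (n : nat) (adj : rel 'I_n) (x y z w : 'I_n) (tau : R) : Prop :=
  exists lambda : R[i], `|lambda| = 1 /\
    transition adj tau *m (ev R x - ev R y) = lambda *: (ev R z - ev R w).

(* Main.v *)
Require Import Defs.
From HB Require Import structures.
From mathcomp Require Import all_boot all_order all_algebra.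
From mathcomp Require Import complex.
From mathcomp Require Import all_classical all_reals all_analysis.
From mathcomp Require Import spectral sesquilinear ring.
Set Implicit Arguments. Unset Strict Implicit. Unset Printing Implicit Defensive.
Import Order.TTheory GRing.Theory Num.Theory ComplexField.
Import numFieldNormedType.Exports. Import Num.Def.
Local Open Scope classical_set_scope. Local Open Scope complex_scope. Local Open Scope ring_scope.
HB.instance Definition _ (R : realType) := NormedModule.copy R[i] (R[i])^o.
Section S.
Variable R : realType.

Lemma cvgC (u : nat -> R) (l : R) : u n @[n --> \oo] --> l ->
  (u n)%:C @[n --> \oo] --> (l%:C : R[i]).
Proof.
move=> /cvgrPdist_lt H; apply/cvgrPdist_lt => e e0.
have e0' : 0 < complex.Re e by move: e0; rewrite ltcE => /andP[].
have Ime : complex.Im e = 0 by move: e0; rewrite ltcE => /andP[/eqP ->].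
apply: filterS (H _ e0') => m hm.
rewrite -rmorphB normc_def /= expr0n /= addr0 sqrtr_sqr ltcE /= Ime eqxx /=.
done.
Qed.

Lemma i_pow k : ('i ^+ k : R[i]) =
  ((~~ odd k)%:R * (-1) ^+ k./2)%:C + 'i * ((odd k)%:R * (-1) ^+ k.-1./2)%:C.
Proof.
move: (k./2) (odd k) (odd_double_half k) => m b <-; case: b => /=.
  rewrite add1n /= add0n doubleK exprS -mul2n exprM sqr_i.
  by rewrite !rmorphM /= !rmorphXn /= rmorphN1 /= mul0r add0r mul1r.
rewrite add0n -mul2n exprM sqr_i.
by rewrite !rmorphM /= !rmorphXn /= rmorphN1 /= mul0r mulr0 addr0 mul1r.
Qed.

Lemma term_eq (th : R) k :
  (k`!%:R)^-1 * ('i * th%:C) ^+ k =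
  (cos_coeff th k)%:C + 'i * (sin_coeff th k)%:C :> R[i].
Proof.
rewrite /cos_coeff /sin_coeff /= exprMn i_pow.
rewrite !rmorphM /= !rmorphXn /= fmorphV /= !rmorph_nat /=. ring.
Qed.

Lemma cvg_expi (th : R) :
  series (fun k => (k`!%:R)^-1 * ('i * th%:C) ^+ k : R[i]) n @[n --> \oo] -->
  ((cos th)%:C + 'i * (sin th)%:C).
Proof.
have -> : series (fun k => (k`!%:R)^-1 * ('i * th%:C) ^+ k : R[i]) =
   (fun N => (series (cos_coeff th) N)%:C + 'i * (series (sin_coeff th) N)%:C).
  apply/funext => N; rewrite /series /= (eq_bigr _ (fun k _ => term_eq th k)).
  by rewrite big_split /= -mulr_sumr !rmorph_sum.
apply: cvgD; first apply: cvgC.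
  by have := @is_cvg_series_cos_coeff R th; rewrite unlock.
apply: cvgMl_tmp; apply: cvgC.
by have := @is_cvg_series_sin_coeff R th; rewrite unlock.
Qed.

Lemma normexpi (th : R) : `|(cos th)%:C + 'i * (sin th)%:C| = 1 :> R[i].
Proof.
rewrite normc_def /= !mul0r !mul1r !subr0 !addr0 !add0r cos2Dsin2 sqrtr1 //.
Qed.

Variable n : nat.
Implicit Types (P : 'M[R[i]]_n) (r : 'rV[R[i]]_n).

Definition Fmx P r := invmx P *m diag_mx r *m P.

Lemma diag_mul r s : diag_mx r *m diag_mx s = diag_mx (\row_j (r 0 j * s 0 j)).
Proof.
apply/matrixP => i j; rewrite mul_diag_mx !mxE.
by case: (i == j); rewrite ?mulr1n ?mulr0n ?mulr0.
Qed.

Lemma Fmx_mul P r s : P \in unitmx ->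
  Fmx P r *m Fmx P s = Fmx P (\row_j (r 0 j * s 0 j)).
Proof.
move=> hP; rewrite /Fmx !mulmxA mulmxK //.
by rewrite -[invmx P *m _ *m _]mulmxA diag_mul.
Qed.

Lemma Fmx_pow P r k : P \in unitmx ->
  (Fmx P r) ^+ k = Fmx P (\row_j (r 0 j) ^+ k).
Proof.
move=> hP; elim: k => [|k IH].
  rewrite expr0 /Fmx.
  have -> : \row_j (r 0 j) ^+ 0 = const_mx 1 by apply/matrixP => i j; rewrite !mxE expr0.
  by rewrite diag_const_mx mulmx1 mulVmx.
rewrite exprSr -mulmxE IH Fmx_mul //; congr Fmx.
by apply/matrixP => i j; rewrite !mxE exprSr.
Qed.

Lemma Fmx_sum P r :
  Fmx P r = \sum_j r 0 j *: (invmx P *m delta_mx j j *m P).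
Proof.
rewrite /Fmx diag_mx_sum_delta mulmx_sumr mulmx_suml; apply: eq_bigr => j _.
by rewrite -scalemxAr -scalemxAl.
Qed.

Lemma FmxZ P r (c : R[i]) : c *: Fmx P r = Fmx P (\row_j (c * r 0 j)).
Proof.
rewrite !Fmx_sum scaler_sumr; apply: eq_bigr => j _.
by rewrite scalerA mxE.
Qed.

Lemma expmx_F P r (c : R[i]) (e : 'I_n -> R[i]) : P \in unitmx ->
  (forall j, series (fun k => (k`!%:R)^-1 * (c * r 0 j) ^+ k : R[i]) N @[N --> \oo] --> e j) ->
  expmx (c *: Fmx P r) = Fmx P (\row_j e j).
Proof.
move=> hP he; rewrite /expmx.
have -> : series (fun k : nat => (k`!%:R)^-1 *: (c *: Fmx P r) ^+ k) =
   (fun N => \sum_j (series (fun k => (k`!%:R)^-1 * (c * r 0 j) ^+ k : R[i]) N) *: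
      (invmx P *m delta_mx j j *m P)).
  apply/funext => N; rewrite /series /=.
  under eq_bigr => k _ do rewrite FmxZ Fmx_pow // Fmx_sum scaler_sumr.
  rewrite exchange_big /=; apply: eq_bigr => j _.
  rewrite scaler_suml; apply: eq_bigr => k _.
  by rewrite scalerA !mxE.
apply: cvg_lim; first exact: norm_hausdorff.
rewrite Fmx_sum.
under [X in _ --> X]eq_bigr => j _ do rewrite mxE.
apply: cvg_big => //; first exact: add_continuous.
move=> j _; apply: cvgZr_tmp; exact: he.
Qed.

Lemma Fmx_unitary P (e : 'rV[R[i]]_n) : P \is unitarymx ->
  (forall j, `|e 0 j| = 1) ->
  map_mx conjC ((Fmx P e)^T) *m Fmx P e = 1%:M.
Proof.
move=> hP he; have hPu := unitarymx_unit hP.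
rewrite /Fmx invmx_unitary //.
rewrite !trmx_mul !map_mxM trmxCK !mulmxA.
rewrite -[_ *m P *m map_mx conjC (P^T)]mulmxA.
have -> : P *m map_mx conjC (P^T) = 1%:M by apply/unitarymxP.
rewrite mulmx1 -[_ *m _ *m diag_mx e]mulmxA tr_diag_mx map_diag_mx diag_mul.
have -> : \row_j ((map_mx conjC e) 0 j * e 0 j) = const_mx 1.
  apply/matrixP => i j; rewrite !mxE -[_^* * _]mulrC -normCK he expr1n.
  by [].
rewrite diag_const_mx mulmx1 -invmx_unitary //.
exact: mulVmx.
Qed.

Definition ip (u v : 'cV[R[i]]_n) := \sum_k (u k 0)^* * v k 0.

Lemma ipE u v : ip u v = (map_mx conjC (u^T) *m v) 0 0.
Proof. by rewrite mxE; apply: eq_bigr => k _; rewrite !mxE. Qed.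

Lemma ip_iso (U : 'M[R[i]]_n) : map_mx conjC (U^T) *m U = 1%:M ->
  forall u v, ip (U *m u) (U *m v) = ip u v.
Proof.
move=> hU u v; rewrite !ipE trmx_mul map_mxM -mulmxA (mulmxA _ U) hU.
by rewrite mul1mx.
Qed.

Lemma ipBl u v w : ip (u - v) w = ip u w - ip v w.
Proof. by rewrite /ip -sumrB; apply: eq_bigr => k _; rewrite !mxE rmorphB mulrBl. Qed.
Lemma ipBr u v w : ip u (v - w) = ip u v - ip u w.
Proof. by rewrite /ip -sumrB; apply: eq_bigr => k _; rewrite !mxE mulrBr. Qed.
Lemma ipZl a u v : ip (a *: u) v = a^* * ip u v.
Proof. by rewrite /ip mulr_sumr; apply: eq_bigr => k _; rewrite !mxE rmorphM mulrA. Qed.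
Lemma ipZr a u v : ip u (a *: v) = a * ip u v.
Proof. by rewrite /ip mulr_sumr; apply: eq_bigr => k _; rewrite !mxE mulrCA. Qed.
Lemma ip_ev x y : ip (ev R x) (ev R y) = (x == y)%:R.
Proof.
rewrite /ip (bigD1 x) //= big1 ?addr0.
  by rewrite /ev !mxE !eqxx /= conjC1 mul1r andbT eq_sym.
by move=> k hk; rewrite /ev !mxE (negPf hk) /= conjC0 mul0r.
Qed.

Lemma two_sub (x y : bool) :
  (1 - x%:R - (x%:R - 1) = 1 - y%:R - (y%:R - 1) :> R[i]) -> x = y.
Proof.
have h2 : (2%:R : R[i]) != 0 by rewrite pnatr_eq0.
case: x; case: y => //= h; exfalso; move: h.
  rewrite subrr subr0 sub0r opprK => /eqP; rewrite eq_sym -[1 + 1]/(2%:R) (negPf h2) //.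
rewrite subrr subr0 sub0r opprK => /eqP; rewrite -[1 + 1]/(2%:R) (negPf h2) //.
Qed.

Lemma mu_one (x y : bool) (mu : R[i]) : `|mu| = 1 ->
  (0 - x%:R - (1 - 0) = mu * (0 - y%:R - (1 - 0)) :> R[i]) -> mu = 1.
Proof.
move=> hm; rewrite !sub0r !subr0 -!opprD mulrN => /oppr_inj.
rewrite !natr1 => h.
have hxy : (x.+1 = y.+1)%N.
  have := congr1 normr h; rewrite normrM hm mul1r !normr_nat.
  by move/eqP; rewrite eqr_nat => /eqP.
move: h; rewrite hxy -{1}[_%:R]mul1r => /mulIf h.
by apply/esym/h; rewrite pnatr_eq0.
Qed.

Lemma lap_herm (adj : rel 'I_n) : symmetric adj ->
  laplacian R adj \is hermsymmx.
Proof.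
move=> hs; apply/is_hermitianmxP; rewrite expr0 scale1r.
apply/matrixP => x y; rewrite !mxE hs eq_sym.
case: eqP => [->|_] /=; case: ifP => _;
  by rewrite ?rmorphB /= ?conjC_nat ?conjC0 ?conjC1.
Qed.

Lemma transition_unitary (adj : rel 'I_n) (t : R) : symmetric adj ->
  map_mx conjC ((transition adj t)^T) *m transition adj t = 1%:M.
Proof.
move=> hs; have hH := lap_herm hs.
have /orthomx_spectralP hL := hermitian_normalmx hH.
set P := spectralmx _ in hL; set d := spectral_diag _ in hL.
have hPu : P \is unitarymx by apply: spectral_unitarymx.
have hd : d \is a realmx by apply: hermitian_spectral_diag_real.
have hdj : forall j, d 0 j = (complex.Re (d 0 j))%:C.
  by move=> j; rewrite RRe_real //; move/mxOverP: hd; apply.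
rewrite /transition.
have -> : laplacian R adj = Fmx P d by [].
rewrite (@expmx_F P d _ (fun j => (cos (t * complex.Re (d 0 j)))%:C + 'i * (sin (t * complex.Re (d 0 j)))%:C)).
- apply: Fmx_unitary => // j; rewrite mxE; exact: normexpi.
- exact: unitarymx_unit.
move=> j; rewrite hdj -mulrA -rmorphM /=; exact: cvg_expi.
Qed.
End S.


Theorem mainTheorem4 (R : realType) (n : nat) (adj : rel 'I_n)
    (a b c alpha beta gamma : 'I_n) (tau : R) :
  simple_graph adj ->
  pst adj a b alpha beta tau ->
  pst adj b c beta gamma tau ->
  pst adj a c alpha gamma tau.
Proof.
move=> [hsym _] [l1 [hl1 H1]] [l2 [hl2 H2]].
have iso := ip_iso (transition_unitary tau hsym).
set U := transition adj tau in H1 H2 iso *.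
have ip4 : forall x y z w : 'I_n, ip (ev R x - ev R y) (ev R z - ev R w) =
   (x == z)%:R - (x == w)%:R - ((y == z)%:R - (y == w)%:R).
  by move=> x y z w; rewrite !ipBl !ipBr !ip_ev.
have cl : forall l : R[i], `|l| = 1 -> l^* * l = 1.
  by move=> l hl; rewrite mulrC -normCK hl expr1n.
have cr : forall l : R[i], `|l| = 1 -> l * l^* = 1.
  by move=> l hl; rewrite -normCK hl expr1n.
have eqn : forall (x y z w : 'I_n) (l : R[i]), `|l| = 1 ->
    U *m (ev R x - ev R y) = l *: (ev R z - ev R w) -> (x == y) = (z == w).
  move=> x y z w l hl H; apply: two_sub.
  have := iso (ev R x - ev R y) (ev R x - ev R y).
  rewrite H ipZl ipZr mulrA (cl _ hl) mul1r !ip4 !eqxx (eq_sym y x) (eq_sym w z) => h.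
  exact: (esym h).
have E : ev R a - ev R c = (ev R a - ev R b) + (ev R b - ev R c) by rewrite addrA subrK.
have hab := eqn _ _ _ _ _ hl1 H1.
have hbc := eqn _ _ _ _ _ hl2 H2.
case: (eqVneq a b) => [eab|nab].
  move: hab; rewrite eab eqxx => /esym/eqP eab'.
  by rewrite eab'; exists l2.
case: (eqVneq b c) => [ebc|nbc].
  move: hbc; rewrite ebc eqxx => /esym/eqP ebc'.
  by rewrite -ebc' -ebc; exists l1.
have nab' : alpha != beta by rewrite -hab.
have nbc' : beta != gamma by rewrite -hbc.
have hmu : l1^* * l2 = 1.
  apply: (@mu_one _ (a == c) (alpha == gamma)).
    by rewrite normrM hl2 mulr1 norm_conjC hl1.
  have := iso (ev R a - ev R b) (ev R b - ev R c).
  rewrite H1 H2 ipZl ipZr mulrA !ip4 !eqxx (negPf nab) (negPf nbc) (negPf nab') (negPf nbc') => h.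
  exact: (esym h).
have e12 : l2 = l1.
  by rewrite -[l2]mul1r -(cr _ hl1) -mulrA hmu mulr1.
exists l1; split => //.
by rewrite E mulmxDr H1 H2 e12 -scalerDr addrA subrK.
Qed.
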